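(* Let $\Lambda$ be a lattice of rank $s$ with basis $\mathcal V=(v_1,\ldots,v_s)$, $\bar a=(a_1,\ldots,a_t)\in(\mathcal F^0(\Lambda,\bar K))^t$, and $\bar n=(n_1,\ldots,n_s)$ with each $n_i$ a positive integer coprime to $p$. Let $G=\Lambda/\Lambda_{\bar n,\mathcal V}$, $\bar a_*$ the pushforward, and let $q_0=p^{r_0}$ ($r_0>0$) be minimal such that $\widehat{(a_j)_*}(G^\vee)\subseteq\mathrm{GF}(q_0)$ for all $j=1,\ldots,t$. (a) The following are equivalent: (i) there exists a nonzero $\Lambda_{\bar n,\mathcal V}$-periodic $\bar a$-harmonic function $\Lambda\to\bar K$; (ii) $V(\bar a_* )\ne\emptyset$; (iii) the system $\sigma_{a_j,\mathcal V}(x_1,\ldots,x_s)=0$ ($j=1,\ldots,t$), $x_i^{n_i}=1$ ($i=1,\ldots,s$) has a solution $\xi\in(\bar K^\times)^s$. (b) $\ker(\Delta_{\bar a_*})\subseteq(\mathcal F(G,\bar K),* )$ coincides with the principal convolution ideal generated by the convolution product $\prod_{j=1}^t\big(\delta_0-\Delta_{(a_j)_*}^{q_0-1}(\delta_0)\big)$, and the operator $\prod_{j=1}^t\big(1_G-\Delta_{(a_j)_*}^{q_0-1}\big)$ is the orthogonal projection of $\mathcal F(G,\bar K)$ onto $\ker(\Delta_{\bar a_*})$. (c) If $t=1$ and $a_1=a$, then (i)–(iii) are equivalent to each of: (iv) $\Delta_{a_*}^{q_0-1}(\delta_0)\ne\delta_0$, equivalently $\Delta_{a_*}^{q_0-1}\ne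 1_G$; (v) the sequence $\big(\Delta_{a_*}^k(\delta_0)\big)_{k\ge0}$ in $\mathcal F(G,\bar K)$ is not periodic.
   Context: $K=\mathrm{GF}(p)$, $\bar K$ an algebraic closure. For an abelian group $G$, $\mathcal F(G,\bar K)$, $\mathcal F^0(G,\bar K)$ denote all, resp. finitely supported, functions $G\to\bar K$; $(f*a)(g)=\sum_hf(h)a(g-h)$, $\Delta_af=f*a$, $\Delta_{\bar a}$ has kernel $\bigcap_j\ker\Delta_{a_j}$; $f$ is $\bar a$-harmonic if $f*a_j=0$ for all $j$. $\delta_0$ is the delta function at $0$, $1_G$ the identity operator. $\Lambda_{\bar n,\mathcal V}=\sum_in_i\mathbb Zv_i$; a function is $\Lambda_{\bar n,\mathcal V}$-periodic if invariant under translations by $\Lambda_{\bar n,\mathcal V}$. With $\pi:\Lambda\to G$ the projection, $(a_j)_*(c)=\sum_{v\in\pi^{-1}(c)}a_j(v)$ and $\bar a_*=((a_j)_* )_j$. $G^\vee$ is the group of homomorphisms $G\to\bar K^\times$, $\hat b(g^\vee)=\sum_{g\in G}b(g)g^\vee(g)$, $V(\bar a_* )=\{g^\vee:\widehat{(a_j)_*}(g^\vee)=0\ \forall j\}$. The symbol is $\sigma_{a,\mathcal V}=\sum_{v=\sum\alpha_iv_i}a(v)x_1^{-\alpha_1}\cdots x_s^{-\alpha_s}$. Orthogonality is with respect to $\langle f_1,f_2\rangle_1=\frac1{|G|}\sum_{g\in G}f_1(g)f_2(-g)$. The principal convolution ideal generated by $f$ is $\{f*c:c\in\mathcal F(G,\bar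 K)\}$. *)

(* Defs.v *)
From HB Require Import structures.
From mathcomp Require Import all_boot all_order all_algebra.
From mathcomp Require Import finmap.
Set Implicit Arguments.
Unset Strict Implicit.
Unset Printing Implicit Defensive.
Import Order.TTheory GRing.Theory.
Local Open Scope ring_scope.

(* The lattice Lambda of rank s, written in coordinates w.r.t. its basis
   V = (v_1,...,v_s): Lambda = Z^s, v_i = i-th standard basis row vector. *)
Notation lat s := 'rV[int]_s.

Notation finfunL s F := {fsfun lat s -> F with 0}.

Section Defs.
Variables (F : fieldType) (s : nat).

(* convolution on Lambda: (f * a)(g) = sum_h f(h) a(g - h)
   = sum_{k in supp a} f(g - k) a(k)   (a finitely supported) *)
Definition convL (f : lat s -> F) (a : finfunL s F) : lat s -> F :=
  fun g => \sum_(k <- finsupp a) f (g - k) * a k.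

Definition harmonic (t : nat) (a : 'I_t -> finfunL s F) (f : lat s -> F) :=
  forall j g, convL f (a j) g = 0.

(* membership in Lambda_{n,V} = sum_i n_i Z v_i *)
Definition inLn (n : 'I_s -> nat) (w : lat s) : bool :=
  [forall i, ((n i)%:Z %| w ord0 i)%Z].

(* Lambda_{n,V}-periodic functions on Lambda; these are identified with the
   functions on G = Lambda / Lambda_{n,V}. *)
Definition periodic (n : 'I_s -> nat) (f : lat s -> F) :=
  forall v w, inLn n w -> f (v + w) = f v.

(* a set of representatives of G = Lambda / Lambda_{n,V}: the box
   { sum_i alpha_i v_i : 0 <= alpha_i < n_i } *)
Definition boxT (n : 'I_s -> nat) := {dffun forall i : 'I_s, 'I_(n i)}.
Definition boxv (n : 'I_s -> nat) (al : boxT n) : lat s :=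
  \row_i ((al i : nat)%:Z).

Definition convG (n : 'I_s -> nat) (f b : lat s -> F) : lat s -> F :=
  fun g => \sum_(al : boxT n) f (boxv al) * b (g - boxv al).

Definition DeltaG (n : 'I_s -> nat) (b : lat s -> F) (f : lat s -> F) :=
  convG n f b.

Definition deltaG (n : 'I_s -> nat) : lat s -> F :=
  fun g => if inLn n g then 1 else 0.

(* push-forward a_star(c) = sum_{v in pi^{-1}(c)} a(v) *)
Definition push (n : 'I_s -> nat) (a : finfunL s F) : lat s -> F :=
  fun c => \sum_(v <- finsupp a | inLn n (v - c)) a v.

(* elements of G^vee: homomorphisms G -> F^x, as periodic multiplicative
   nowhere-zero functions on Lambda *)
Definition is_dual_char (n : 'I_s -> nat) (chi : lat s -> F) :=
  [/\ periodic n chi,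
      forall v w, chi (v + w) = chi v * chi w
    & forall v, chi v != 0].

Definition hatG (n : 'I_s -> nat) (b : lat s -> F) (chi : lat s -> F) : F :=
  \sum_(al : boxT n) b (boxv al) * chi (boxv al).

Definition V_nonempty (n : 'I_s -> nat) (t : nat) (a : 'I_t -> finfunL s F) :=
  exists chi, is_dual_char n chi /\ forall j, hatG n (push n (a j)) chi = 0.

Definition symbol_eval (a : finfunL s F) (xi : 'I_s -> F) : F :=
  \sum_(v <- finsupp a) a v * \prod_(i < s) (xi i) ^ (- v ord0 i).

Definition ipG (n : 'I_s -> nat) (f1 f2 : lat s -> F) : F :=
  (#|{: boxT n}|%:R)^-1 * \sum_(al : boxT n) f1 (boxv al) * f2 (- boxv al).

Definition orth_proj (n : 'I_s -> nat) (W : (lat s -> F) -> Prop)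
    (P : (lat s -> F) -> (lat s -> F)) :=
  [/\ forall f, periodic n f -> periodic n (P f) /\ W (P f),
      forall w, periodic n w -> W w -> P w = w
    & forall f w, periodic n f -> periodic n w -> W w ->
        ipG n (fun g => f g - P f g) w = 0].

End Defs.

(* Main.v *)
Require Import Defs.
From HB Require Import structures.
From mathcomp Require Import all_boot all_order all_algebra.
From mathcomp Require Import finmap.
From mathcomp Require Import ring zify.
From Stdlib Require Import FunctionalExtensionality Classical.
Set Implicit Arguments.
Unset Strict Implicit.
Unset Printing Implicit Defensive.
Import Order.TTheory GRing.Theory Num.Theory.
Local Open Scope ring_scope.

Section Infra.
Variables (F : fieldType) (s : nat) (n : 'I_s -> nat).
Hypothesis n_gt0 : forall i, (0 < n i)%N.

Lemma inLnP (w : lat s) : reflect (forall i, ((n i)%:Z %| w ord0 i)%Z) (inLn n w).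
Proof. exact: forallP. Qed.

Lemma inLn0 : inLn n 0.
Proof. by apply/inLnP => i; rewrite mxE dvdz0. Qed.

Lemma inLnD x y : inLn n x -> inLn n y -> inLn n (x + y).
Proof. by move=> /inLnP hx /inLnP hy; apply/inLnP => i; rewrite mxE rpredD. Qed.

Lemma inLnN x : inLn n (- x) = inLn n x.
Proof.
apply/inLnP/inLnP => h i; move: (h i); rewrite mxE //.
  by rewrite rpredN.
by move=> hh; rewrite rpredN.
Qed.

Lemma inLnB x y : inLn n x -> inLn n y -> inLn n (x - y).
Proof. by move=> hx hy; apply: inLnD => //; rewrite inLnN. Qed.

Lemma inLn_sym x y : inLn n (x - y) = inLn n (y - x).
Proof. by rewrite -inLnN opprB. Qed.

Lemma per_eq (f : lat s -> F) v u : periodic n f -> inLn n (v - u) -> f v = f u.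
Proof. by move=> hf h; rewrite -(hf u (v - u) h) addrC subrK. Qed.

Lemma rep_lt (v : lat s) i : (absz (v ord0 i %% (n i)%:Z)%Z < n i)%N.
Proof.
have h0 : (n i)%:Z != 0 by rewrite eqz_nat -lt0n n_gt0.
rewrite -ltz_nat gez0_abs ?modz_ge0 //; apply: ltz_pmod; rewrite ltz_nat; exact: n_gt0.
Qed.

Definition rep (v : lat s) : boxT n := [ffun i => Ordinal (rep_lt v i)].
Local Notation bv := (@boxv s n).

Lemma rep_spec v : inLn n (v - bv (rep v)).
Proof.
apply/inLnP => i; rewrite !mxE ffunE /=.
have h0 : (n i)%:Z != 0 by rewrite eqz_nat -lt0n n_gt0.
rewrite gez0_abs ?modz_ge0 //.
by rewrite {1}(divz_eq (v ord0 i) (n i)) addrK dvdz_mull.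
Qed.

Lemma bv_inj al be : inLn n (bv al - bv be) -> al = be.
Proof.
move=> /inLnP h; apply/ffunP => i; apply/val_inj => /=.
move: (h i); rewrite !mxE -eqz_mod_dvd.
rewrite !modz_small ?ltz_nat ?ltn_ord //; by move/eqP => [].
Qed.

Lemma rep_eqP x y : (rep x == rep y) = inLn n (x - y).
Proof.
apply/eqP/idP => [e|h].
  have := inLnB (rep_spec x) (rep_spec y).
  by rewrite e opprB addrA subrK.
apply: bv_inj.
have := inLnD (inLnB (rep_spec y) (rep_spec x)) h.
suff -> : y - bv (rep y) - (x - bv (rep x)) + (x - y) = bv (rep x) - bv (rep y) by [].
by apply/matrixP => i j; rewrite !mxE; ring.
Qed.
Lemma rep_bv al : rep (bv al) = al.
Proof. by apply: bv_inj; rewrite inLn_sym; apply: rep_spec. Qed.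

Lemma per_rep (h : lat s -> F) u : periodic n h -> h (bv (rep u)) = h u.
Proof. by move=> hh; apply: per_eq => //; rewrite inLn_sym rep_spec. Qed.

Lemma pick_sum (h : lat s -> F) w : periodic n h ->
  \sum_(al : boxT n) (if inLn n (w - bv al) then h (bv al) else 0) = h w.
Proof.
move=> hh; rewrite -big_mkcond /=.
rewrite (eq_bigl (pred1 (rep w))) ?big_pred1_eq ?per_rep // => al /=.
by rewrite -rep_eqP rep_bv eq_sym.
Qed.

Lemma sum_shift (h : lat s -> F) w : periodic n h ->
  \sum_(al : boxT n) h (bv al - w) = \sum_(al : boxT n) h (bv al).
Proof.
move=> hh.
have Tinj : injective (fun al => rep (bv al - w)).
  move=> x y /eqP; rewrite rep_eqP => e; apply: bv_inj.
  by move: e; rewrite opprB addrA subrK.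
rewrite [RHS](reindex_inj Tinj) /=; apply: eq_bigr => al _.
by rewrite per_rep.
Qed.

Lemma card_box_neq0 p : prime p -> p \in [pchar F] -> (forall i, coprime (n i) p) ->
  (#|{: boxT n}|%:R : F) != 0.
Proof.
move=> pp hc hcop; rewrite card_dep_ffun.
have : coprime (foldr muln 1 [seq #|'I_(n x)| | x : 'I_s]) p.
  rewrite /image_mem; elim: (enum _) => [|x l IH] /=; first by rewrite coprime1n.
  by rewrite coprimeMl card_ord hcop IH.
rewrite coprime_sym prime_coprime // -(dvdn_pcharf hc).
by [].
Qed.
Lemma inLnDr x w : inLn n w -> inLn n (x + w) = inLn n x.
Proof.
move=> hw; apply/idP/idP => h; last exact: inLnD.
by have := inLnB h hw; rewrite addrK.
Qed.

Lemma per_convG (f b : lat s -> F) : periodic n b -> periodic n (convG n f b).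
Proof.
move=> hb v w hw; rewrite /convG; apply: eq_bigr => al _; congr (_ * _).
by rewrite -(hb (v - bv al) w hw) addrAC.
Qed.

Lemma per_delta : periodic n (deltaG F n).
Proof. by move=> v w hw; rewrite /deltaG inLnDr. Qed.

Lemma per_push (a : finfunL s F) : periodic n (push n a).
Proof.
move=> v w hw; rewrite /push; apply: eq_bigl => u.
by rewrite opprD addrA (inLnDr (u - v)) // inLnN.
Qed.

Lemma per_sub (f g : lat s -> F) : periodic n f -> periodic n g ->
  periodic n (fun x => f x - g x).
Proof. by move=> hf hg v w hw; rewrite hf // hg. Qed.

Lemma per_iter k (f b : lat s -> F) : periodic n b -> periodic n f ->
  periodic n (iter k (DeltaG n b) f).
Proof. by move=> hb hf; case: k => [|k] //=; apply: per_convG. Qed.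

Section Mono.
Variable xi : 'I_s -> F.
Hypothesis xi_neq0 : forall i, xi i != 0.
Definition mono (v : lat s) : F := \prod_i xi i ^ (v ord0 i).

Lemma mono_add u v : mono (u + v) = mono u * mono v.
Proof. by rewrite /mono -big_split; apply: eq_bigr => i _; rewrite mxE expfzDr. Qed.

Lemma mono0 : mono 0 = 1.
Proof. by rewrite /mono big1 // => i _; rewrite mxE expr0z. Qed.

Lemma mono_neq0 v : mono v != 0.
Proof. by rewrite /mono prodf_seq_neq0; apply/allP => i _; rewrite expfz_eq0 negb_and xi_neq0 orbT. Qed.

Lemma mono_N v : mono (- v) = (mono v)^-1.
Proof.
have h : mono v * mono (- v) = 1 by rewrite -mono_add subrr mono0.
by rewrite -[LHS](mulKf (mono_neq0 v)) h mulr1.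
Qed.

Lemma pow_dvd1 (x : F) m z : x ^+ m = 1 -> ((m%:Z) %| z)%Z -> x ^ z = 1.
Proof.
move=> hx /dvdzP [q ->]; by rewrite mulrC -exprz_exp -exprnP hx exp1rz.
Qed.

Hypothesis xi_n : forall i, xi i ^+ n i = 1.
Lemma mono_per : periodic n mono.
Proof.
move=> v w /inLnP hw; rewrite mono_add /mono [X in _ * X]big1 ?mulr1 // => i _.
exact: pow_dvd1 (xi_n i) (hw i).
Qed.
End Mono.

Lemma per_cmul (c : F) (h : lat s -> F) : periodic n h -> periodic n (fun x => h x * c).
Proof. by move=> hh v w hw; rewrite hh. Qed.

Lemma convL_push (f : lat s -> F) (a : finfunL s F) g : periodic n f ->
  convL f a g = convG n f (push n a) g.
Proof.
move=> hf; rewrite /convL /convG /push.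
under [RHS]eq_bigr do rewrite big_distrr big_mkcond /=.
rewrite exchange_big /=; apply: eq_bigr => v _.
rewrite -(pick_sum (g - v) (per_cmul (a v) hf)); apply: eq_bigr => al _.
have -> : v - (g - bv al) = - (g - v - bv al) by apply/matrixP => i j; rewrite !mxE; ring.
by rewrite inLnN; case: ifP.
Qed.

Lemma push_sum (a : finfunL s F) (h : lat s -> F) : periodic n h ->
  hatG n (push n a) h = \sum_(v <- finsupp a) a v * h v.
Proof.
move=> hh; rewrite /hatG /push.
under eq_bigr do rewrite big_distrl big_mkcond /=.
rewrite exchange_big /=; apply: eq_bigr => v _.
have hh' : periodic n (fun x => a v * h x) by move=> x w hw; rewrite hh.
rewrite -(pick_sum v hh'); apply: eq_bigr => al _.
by case: ifP.
Qed.

Lemma H0 (f : lat s -> F) chi : (forall g, f g = 0) -> hatG n f chi = 0.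
Proof. by move=> h; rewrite /hatG big1 // => al _; rewrite h mul0r. Qed.

Lemma dual_0 (chi : lat s -> F) : is_dual_char n chi -> chi 0 = 1.
Proof.
case=> _ hm hnz; apply: (mulfI (hnz 0)); by rewrite mulr1 -hm addr0.
Qed.

Lemma dual_N (chi : lat s -> F) v : is_dual_char n chi -> chi (- v) = (chi v)^-1.
Proof.
move=> hc; have [_ hm hnz] := hc.
have h : chi v * chi (- v) = 1 by rewrite -hm subrr dual_0.
by rewrite -[LHS](mulKf (hnz v)) h mulr1.
Qed.

Lemma dual_muln (chi : lat s -> F) (e : lat s) m : is_dual_char n chi -> chi (e *+ m) = chi e ^+ m.
Proof.
move=> hc; have [_ hm _] := hc; elim: m => [|m IH]; first by rewrite mulr0n dual_0.
by rewrite mulrS hm IH exprS.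
Qed.

Lemma dual_mulz (chi : lat s -> F) (e : lat s) z : is_dual_char n chi -> chi (e *~ z) = chi e ^ z.
Proof.
move=> hc; case: z => m; first exact: dual_muln.
by rewrite NegzE mulrNz dual_N // -invr_expz; congr (_^-1); exact: dual_muln.
Qed.

Lemma dual_prod (chi : lat s -> F) (v : lat s) : is_dual_char n chi ->
  chi v = \prod_i chi (delta_mx 0 i) ^ (v ord0 i).
Proof.
move=> hc; have [_ hm _] := hc.
rewrite {1}[v]row_sum_delta (big_morph chi hm (dual_0 hc)).
apply: eq_bigr => i _.
by rewrite -{1}[v 0 i]intz scaler_int dual_mulz.
Qed.

Lemma ii_iii (t : nat) (a : 'I_t -> finfunL s F) (chi : lat s -> F) :
  is_dual_char n chi -> (forall j, hatG n (push n (a j)) chi = 0) ->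
  exists xi : 'I_s -> F,
      (forall i, xi i != 0) /\ (forall j, symbol_eval (a j) xi = 0) /\
      (forall i, xi i ^+ n i = 1).
Proof.
move=> hc ha; have [hp hm hnz] := hc.
exists (fun i => (chi (delta_mx 0 i))^-1); split; [|split].
- by move=> i; rewrite invr_eq0.
- move=> j; rewrite -(ha j) push_sum //; apply: eq_bigr => v _.
  by rewrite (dual_prod v hc); congr (_ * _); apply: eq_bigr => i _; rewrite exprz_inv opprK.
- move=> i; rewrite exprVn -dual_muln // -[X in chi X]add0r hp ?dual_0 ?invr1 //.
  apply/inLnP => k; rewrite mulmxnE mxE.
  have [->|hik] := eqVneq i k; first by rewrite !eqxx /= mulr1n natz dvdzz.
  by rewrite andbF mul0rn dvdz0.
Qed.

Lemma iii_i (t : nat) (a : 'I_t -> finfunL s F) (xi : 'I_s -> F) :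
  (forall i, xi i != 0) -> (forall j, symbol_eval (a j) xi = 0) ->
  (forall i, xi i ^+ n i = 1) ->
  exists f : lat s -> F, (exists v, f v != 0) /\ periodic n f /\ harmonic a f.
Proof.
move=> h0 hs hn; exists (mono xi); split; [|split].
- by exists 0; rewrite mono0 oner_neq0.
- exact: mono_per.
- move=> j g; rewrite /convL.
  under eq_bigr do rewrite (mono_add h0) -mulrA.
  rewrite -big_distrr /=.
  suff -> : \sum_(v <- finsupp (a j)) mono xi (- v) * a j v = symbol_eval (a j) xi
    by rewrite hs mulr0.
  rewrite /symbol_eval; apply: eq_bigr => v _; rewrite mulrC /mono; congr (_ * _).
  by apply: eq_bigr => i _; rewrite mxE.
Qed.

Section Chars.
Variable zeta : 'I_s -> F.
Hypothesis zeta_prim : forall i, (n i).-primitive_root (zeta i).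

Lemma zeta_n i : zeta i ^+ n i = 1.
Proof. exact: prim_expr_order. Qed.

Lemma zeta_neq0 i : zeta i != 0.
Proof.
apply/eqP => h; have := zeta_n i; rewrite h expr0n.
by case: (n i) (n_gt0 i) => // k _ /eqP; rewrite eq_sym oner_eq0.
Qed.

Lemma zeta_z1 i z : (zeta i ^ z == 1) = ((n i)%:Z %| z)%Z.
Proof.
have h0 : (n i)%:Z != 0 by rewrite eqz_nat -lt0n n_gt0.
rewrite {1}(divz_eq z (n i)) expfzDr ?zeta_neq0 //.
rewrite [(_ %/ _)%Z * _]mulrC -exprz_exp -exprnP zeta_n exp1rz mul1r.
rewrite -(gez0_abs (modz_ge0 z h0)) -exprnP -(prim_order_dvd (zeta_prim i)).
have hr : (`|(z %% n i)%Z| < n i)%N.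
  by rewrite -ltz_nat gez0_abs ?modz_ge0 // ltz_pmod // ltz_nat n_gt0.
apply/idP/idP => [h|/dvdz_mod0P ->//].
move: h; rewrite /dvdn modn_small // absz_eq0 => /eqP h.
by apply/dvdz_mod0P.
Qed.

Definition chi2 (u v : lat s) : F := mono (fun i => zeta i ^ (u (@ord0 0) i)) v.

Lemma zu_neq0 (u : lat s) i : zeta i ^ (u ord0 i) != 0.
Proof. by rewrite expfz_eq0 negb_and zeta_neq0 orbT. Qed.

Lemma zu_n (u : lat s) i : (zeta i ^ (u ord0 i)) ^+ n i = 1.
Proof. by rewrite exprnP exprzAC -exprnP zeta_n exp1rz. Qed.

Lemma chi2_sym u v : chi2 u v = chi2 v u.
Proof. by rewrite /chi2 /mono; apply: eq_bigr => i _; rewrite !exprz_exp mulrC. Qed.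

Lemma chi2_add u v w : chi2 u (v + w) = chi2 u v * chi2 u w.
Proof. by rewrite /chi2 (mono_add (zu_neq0 u)). Qed.

Lemma chi2_per u : periodic n (chi2 u).
Proof. exact: mono_per (zu_neq0 u) (zu_n u). Qed.

Lemma chi2_dual u : is_dual_char n (chi2 u).
Proof. split; [exact: chi2_per | exact: chi2_add | exact: mono_neq0 (zu_neq0 u)]. Qed.

Lemma chi2_0 u : chi2 u 0 = 1.
Proof. exact: mono0. Qed.

Lemma chi2_e i w : chi2 (delta_mx 0 i) w = zeta i ^ (w ord0 i).
Proof.
rewrite chi2_sym /chi2 /mono (bigD1 i) //= big1 ?mulr1.
  by rewrite mxE !eqxx /= exprz_exp mulr1.
by move=> k hk; rewrite mxE (negbTE hk) andbF expr0z.
Qed.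

Lemma ortho w : \sum_(be : boxT n) chi2 (bv be) w =
  if inLn n w then (#|{: boxT n}|%:R : F) else 0.
Proof.
case: ifP => hw.
  rewrite (eq_bigr (fun _ => 1)) ?sumr_const // => be _.
  by rewrite -[w]add0r chi2_per // chi2_0.
have [i hi] : exists i, ~~ ((n i)%:Z %| w ord0 i)%Z.
  by apply/existsP; rewrite -negb_forall; apply/negbT.
set S := \sum_(be : boxT n) _.
have hper : periodic n (fun u => chi2 u w).
  by move=> u x hx /=; rewrite chi2_sym chi2_per // chi2_sym.
have e : S = S * zeta i ^ (w ord0 i).
  rewrite {1}/S -(sum_shift (- delta_mx 0 i) hper) /S big_distrl /=.
  apply: eq_bigr => be _; rewrite opprK -chi2_e [LHS]chi2_sym chi2_add.
  by congr (_ * _); apply: chi2_sym.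
apply/eqP; move: e => /eqP; rewrite -subr_eq0 -{1}[S]mulr1 -mulrBr mulf_eq0.
by rewrite subr_eq0 [1 == _]eq_sym zeta_z1 (negbTE hi) orbF.
Qed.

Definition H (f : lat s -> F) (be : boxT n) := hatG n f (chi2 (bv be)).

Lemma per_mul (f g : lat s -> F) : periodic n f -> periodic n g -> periodic n (fun x => f x * g x).
Proof. by move=> hf hg v w hw; rewrite hf // hg. Qed.

Lemma H_conv (f b : lat s -> F) be : periodic n b -> H (convG n f b) be = H f be * H b be.
Proof.
move=> hb; rewrite /H /hatG /convG.
under eq_bigr do rewrite big_distrl /=.
rewrite exchange_big big_distrl /=; apply: eq_bigr => ga _.
have hh := per_mul hb (chi2_per (bv be)).
rewrite -[X in _ = _ * X](sum_shift (bv ga) hh) big_distrr /=.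
apply: eq_bigr => al _.
have -> : chi2 (bv be) (bv al) = chi2 (bv be) (bv ga) * chi2 (bv be) (bv al - bv ga).
  by rewrite -chi2_add addrC subrK.
ring.
Qed.

Lemma H_delta be : H (deltaG F n) be = 1.
Proof.
rewrite /H /hatG -(chi2_0 (bv be)) -(pick_sum 0 (chi2_per (bv be))).
apply: eq_bigr => al _; rewrite /deltaG sub0r inLnN.
by case: ifP; rewrite ?mul1r ?mul0r.
Qed.

Lemma H_sub (f g : lat s -> F) be : H (fun x => f x - g x) be = H f be - H g be.
Proof. by rewrite /H /hatG -sumrB; apply: eq_bigr => al _; rewrite mulrBl. Qed.

Lemma H_iter k (f b : lat s -> F) be : periodic n b ->
  H (iter k (DeltaG n b) f) be = H f be * H b be ^+ k.
Proof.
move=> hb; elim: k => [|k IH]; first by rewrite expr0 mulr1.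
by rewrite iterS /DeltaG H_conv // IH exprSr mulrA.
Qed.

Lemma fourier_inv (f : lat s -> F) g : periodic n f ->
  \sum_(be : boxT n) H f be * chi2 (bv be) (- g) = #|{: boxT n}|%:R * f g.
Proof.
move=> hf; rewrite /H /hatG.
under eq_bigr do rewrite big_distrl /=.
rewrite exchange_big /=.
have hf' : periodic n (fun x => #|{: boxT n}|%:R * f x) by move=> v w hw; rewrite hf.
rewrite -(pick_sum g hf'); apply: eq_bigr => al _.
under eq_bigr do rewrite -mulrA -chi2_add.
rewrite -big_distrr /= ortho inLn_sym.
by case: ifP; rewrite ?mulr0 // mulrC.
Qed.

Hypothesis HN : (#|{: boxT n}|%:R : F) != 0.

Lemma fourier_inj (f : lat s -> F) : periodic n f ->
  (forall be, H f be = 0) -> forall g, f g = 0.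
Proof.
move=> hf h0 g; have := fourier_inv g hf.
rewrite big1 => [/esym/eqP|be _]; last by rewrite h0 mul0r.
by rewrite mulf_eq0 (negbTE HN) /= => /eqP.
Qed.

Lemma fourier_eq (f g : lat s -> F) : periodic n f -> periodic n g ->
  (forall be, H f be = H g be) -> f = g.
Proof.
move=> hf hg e; apply: functional_extensionality => x; apply/eqP; rewrite -subr_eq0; apply/eqP.
apply: (fourier_inj (f := fun x => f x - g x)) => [|be]; first exact: per_sub.
by rewrite H_sub e subrr.
Qed.

End Chars.

End Infra.

From mathcomp Require Import cyclic separable cyclotomic.

Lemma prim_exists (F : closedFieldType) m : (0 < m)%N -> m%:R != 0 :> F ->
  exists z : F, m.-primitive_root z.
Proof.
move=> hm hm0.
have [rs Drs] := closed_field_poly_normal ('X^m - 1 : {poly F}).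
rewrite (monicP (monic_Xn_sub_1 _ hm)) scale1r in Drs.
have hsep := separable_Xn_sub_1 hm0.
rewrite Drs separable_prod_XsubC in hsep.
have hsz : size rs = m.
  have := size_Xn_sub_1 F hm; rewrite Drs size_prod_XsubC; by case.
have hall : all m.-unity_root rs.
  apply/allP => x hx; have : root ('X^m - 1) x by rewrite Drs root_prod_XsubC.
  by [].
have := has_prim_root hm hall hsep; rewrite hsz leqnn => /(_ isT) /hasP [z _ hz].
by exists z.
Qed.
Unset Implicit Arguments.

Theorem theorem3p2
  (p : nat) (F : closedFieldType)
  (Hp : prime p) (HcharF : p \in [pchar F])
  (Halg : forall x : F, exists k : nat, (0 < k)%N /\ x ^+ (p ^ k) = x)
  (s t : nat) (a : 'I_t -> finfunL s F) (n : 'I_s -> nat)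
  (Hn : forall i, (0 < n i)%N /\ coprime (n i) p)
  (r0 : nat)
  (Hr0 : (0 < r0)%N /\
         forall j chi, is_dual_char n chi ->
           hatG n (push n (a j)) chi ^+ (p ^ r0) = hatG n (push n (a j)) chi)
  (Hr0min : forall r, (0 < r)%N ->
         (forall j chi, is_dual_char n chi ->
           hatG n (push n (a j)) chi ^+ (p ^ r) = hatG n (push n (a j)) chi) ->
         (r0 <= r)%N) :
  let q0 := (p ^ r0)%N in
  let Cond_i := exists f : lat s -> F,
      (exists v, f v != 0) /\ periodic n f /\ harmonic a f in
  let Cond_ii := V_nonempty n a in
  let Cond_iii := exists xi : 'I_s -> F,
      (forall i, xi i != 0) /\ (forall j, symbol_eval (a j) xi = 0) /\
      (forall i, xi i ^+ n i = 1) in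
  let kerA := fun f : lat s -> F =>
      forall j g, convG n f (push n (a j)) g = 0 in
  let gen := \big[convG n / deltaG F n]_(j < t)
      (fun g => deltaG F n g
         - iter q0.-1 (DeltaG n (push n (a j))) (deltaG F n) g) in
  let Pop := \big[(fun P Q => P \o Q) / id]_(j < t)
      (fun f g => f g - iter q0.-1 (DeltaG n (push n (a j))) f g) in
  (* (a) *)
  ((Cond_i <-> Cond_ii) /\ (Cond_ii <-> Cond_iii)) /\
  (* (b) *)
  ((forall f, (periodic n f /\ kerA f) <->
              (exists c, periodic n c /\ f = convG n gen c)) /\
   orth_proj n kerA Pop) /\
  (* (c) *)
  (forall j0 : 'I_t, t = 1%N ->
     let D := DeltaG n (push n (a j0)) in
     let Cond_iv := exists g, iter q0.-1 D (deltaG F n) g != deltaG F n g in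
     let Cond_iv' := exists f, periodic n f /\
                       exists g, iter q0.-1 D f g != f g in
     let Cond_v := ~ exists P, (0 < P)%N /\
                       forall k, iter (k + P) D (deltaG F n) = iter k D (deltaG F n) in
     (Cond_i <-> Cond_iv) /\ (Cond_iv <-> Cond_iv') /\ (Cond_i <-> Cond_v)).
Proof.
Proof.
move: Hr0 => [r0_gt0 Hfrob0].
move=> q0 Cond_i Cond_ii Cond_iii kerA gen Pop.
have n_gt0 i : (0 < n i)%N := (Hn i).1.
have hcop i : coprime (n i) p := (Hn i).2.
have hnR i : (n i)%:R != 0 :> F.
  by rewrite -(dvdn_pcharf HcharF) -prime_coprime // coprime_sym.
have hz i : exists z : F, (n i).-primitive_root z := prim_exists (n_gt0 i) (hnR i).
pose zeta i := xchoose (hz i).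
have zp i : (n i).-primitive_root (zeta i) := xchooseP (hz i).
have HN : (#|{: boxT n}|%:R : F) != 0 := card_box_neq0 Hp HcharF hcop.
have Hc := H_conv n_gt0 zp.
have Hd := H_delta n_gt0 zp.
have Hi := H_iter n_gt0 zp.
have Fi := fourier_inj n_gt0 zp HN.
have Fe := fourier_eq n_gt0 zp HN.
have hb j : periodic n (push n (a j)) := per_push (a j).
have hq0 : (1 < q0)%N by rewrite /q0 -{1}(expn0 p) ltn_exp2l // prime_gt1.
have hq1 : (0 < q0.-1)%N by case: (q0) hq0 => [|[|k]].
have frob j (be : boxT n) : H zeta (push n (a j)) be ^+ q0 = H zeta (push n (a j)) be.
  have := Hfrob0 j _ (chi2_dual n_gt0 zp (@boxv s n be)); exact.
have Eval j (be : boxT n) : H zeta (push n (a j)) be ^+ q0.-1 =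
    (if H zeta (push n (a j)) be == 0 then 0 else 1).
  case: eqP => [->|hne]; first by rewrite expr0n gtn_eqF.
  have := frob j be; rewrite -(prednK (ltnW hq0)) exprS => h.
  by apply: (mulfI (introN eqP hne)); rewrite h mulr1.
pose PE (be : boxT n) := \prod_(j < t) (1 - H zeta (push n (a j)) be ^+ q0.-1).
have PE1 be : (forall j, H zeta (push n (a j)) be = 0) -> PE be = 1.
  by move=> h; rewrite /PE big1 // => j _; rewrite Eval h eqxx subr0.
have PE0 be j : H zeta (push n (a j)) be != 0 -> PE be = 0.
  by move=> h; rewrite /PE (bigD1 j) //= Eval (negbTE h) subrr mul0r.
have Hgen : periodic n gen /\ forall be, H zeta gen be = PE be.
  rewrite /gen /PE /=; elim: (index_enum _) => [|x r [IHp IHh]].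
    rewrite !big_nil; split => [|be]; [exact: per_delta | by rewrite big_nil Hd].
  rewrite !big_cons; split; first exact: per_convG.
  by move=> be; rewrite big_cons Hc // IHh H_sub Hd Hi // Hd mul1r.
have Hpop : forall f, periodic n f -> periodic n (Pop f) /\
    forall be, H zeta (Pop f) be = PE be * H zeta f be.
  move=> f hf; rewrite /Pop /PE /=; elim: (index_enum _) => [|x r [IHp IHh]].
    by rewrite !big_nil; split => // be; rewrite big_nil mul1r.
  rewrite !big_cons /=; split; first by apply: per_sub => //; apply: per_iter.
  move=> be; rewrite big_cons H_sub Hi // IHh; ring.
have kerA_of f : periodic n f ->
    (forall j (be : boxT n), H zeta f be * H zeta (push n (a j)) be = 0) -> kerA f.
  move=> hf h j; apply: (Fi _ (per_convG _ (hb j))) => be.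
  by rewrite Hc //; apply: h.
have kerPE w : kerA w -> forall (be : boxT n), H zeta w be != 0 -> PE be = 1.
  move=> hk be hw; apply: PE1 => j.
  have : H zeta (convG n w (push n (a j))) be = 0 by apply: H0 => g; exact: hk j g.
  by rewrite Hc // => /eqP; rewrite mulf_eq0 (negbTE hw) => /eqP.
pose Z := exists be : boxT n, forall j, H zeta (push n (a j)) be = 0.
have i_Z : Cond_i -> Z.
  case=> f [[v hv] [hf hh]].
  case: (boolP [exists be : boxT n, H zeta f be != 0]) => [/existsP [be hbe] | /existsPn hall].
    exists be => j.
    have : H zeta (convG n f (push n (a j))) be = 0.
      by apply: H0 => g; rewrite -(convL_push n_gt0) //; exact: hh j g.
    by rewrite Hc // => /eqP; rewrite mulf_eq0 (negbTE hbe) => /eqP.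
  exfalso; move/eqP: hv; apply; apply: (Fi _ hf) => be.
  by apply/eqP; move: (hall be); rewrite negbK.
have Z_ii : Z -> Cond_ii.
  case=> be h; exists (chi2 zeta (@boxv s n be)); split; last exact: h.
  exact: (chi2_dual n_gt0 zp (@boxv s n be)).
have ii_iii' : Cond_ii -> Cond_iii.
  by case=> chi [hc h]; exact: ii_iii hc h.
have iii_i' : Cond_iii -> Cond_i.
  by case=> xi [h0 [hs hn]]; exact: iii_i.
split.
  split; split.
  - by move=> /i_Z /Z_ii.
  - by move=> /ii_iii' /iii_i'.
  - exact: ii_iii'.
  - by move=> /iii_i' /i_Z /Z_ii.
split.
  split.
    move=> f; split.
      case=> hf hk; exists f; split => //.
      apply: Fe => //; first exact: per_convG.
      move=> be; rewrite Hc // Hgen.2.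
      have [->|hne] := eqVneq (H zeta f be) 0; first by rewrite mulr0.
      by rewrite (kerPE f hk be hne) mul1r.
    case=> c [hc ->]; split; first exact: per_convG.
    apply: kerA_of; first exact: per_convG.
    move=> j be; rewrite Hc // Hgen.2.
    have [->|hne] := eqVneq (H zeta (push n (a j)) be) 0; first by rewrite mulr0.
    by rewrite (PE0 be j hne) !mul0r.
  split.
  - move=> f hf; have [hp hH] := Hpop f hf; split => //.
    apply: kerA_of => // j be; rewrite hH.
    have [->|hne] := eqVneq (H zeta (push n (a j)) be) 0; first by rewrite mulr0.
    by rewrite (PE0 be j hne) !mul0r.
  - move=> w hw hk; have [hp hH] := Hpop w hw.
    apply: Fe => // be; rewrite hH.
    have [->|hne] := eqVneq (H zeta w be) 0; first by rewrite mulr0.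
    by rewrite (kerPE w hk be hne) mul1r.
  - move=> f w hf hw hk; have [hp hH] := Hpop f hf.
    have hh : periodic n (fun g => f g - Pop f g) by apply: per_sub.
    have e0 : forall g, convG n (fun g => f g - Pop f g) w g = 0.
      apply: (Fi _ (per_convG _ hw)) => be; rewrite Hc // H_sub hH.
      have [->|hne] := eqVneq (H zeta w be) 0; first by rewrite mulr0.
      by rewrite (kerPE w hk be hne) mul1r subrr mul0r.
    rewrite /ipG (_ : \sum_(al : boxT n) _ = convG n (fun g => f g - Pop f g) w 0) ?e0 ?mulr0 //.
    rewrite -[RHS](e0 0) /convG; apply: eq_bigr => al _; by rewrite sub0r.
move=> j0 ht D Cond_iv Cond_iv' Cond_v.
have jj (j : 'I_t) : j = j0.
  apply: val_inj => /=; have := ltn_ord j; have := ltn_ord j0; lia.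
pose Z0 := exists be : boxT n, H zeta (push n (a j0)) be = 0.
have iZ0 : Cond_i <-> Z0.
  split; first by case/i_Z => be h; exists be; exact: h.
  case=> be h; apply/iii_i'/ii_iii'/Z_ii; exists be => j; by rewrite (jj j).
have hD : periodic n (push n (a j0)) := hb j0.
have iterE : (forall be : boxT n, H zeta (push n (a j0)) be != 0) ->
    forall f, periodic n f -> iter q0.-1 D f = f.
  move=> hall f hf; rewrite /D; apply: Fe => //; first exact: per_iter.
  by move=> be; rewrite Hi // Eval (negbTE (hall be)) mulr1.
have notZ0 : ~ Z0 -> forall be : boxT n, H zeta (push n (a j0)) be != 0.
  by move=> hn be; apply/eqP => e; apply: hn; exists be.
have Z0_iv : Z0 -> Cond_iv.
  case=> be h0; apply: NNPP => hn.
  have e : iter q0.-1 D (deltaG F n) = deltaG F n.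
    apply: functional_extensionality => g.
    case: (eqVneq (iter q0.-1 D (deltaG F n) g) (deltaG F n g)) => // hne.
    by exfalso; apply: hn; exists g.
  have := congr1 (fun f => H zeta f be) e => /=.
  rewrite Hi // Hd Eval h0 eqxx mul1r => /eqP; by rewrite eq_sym oner_eq0.
have iv_Z0 : Cond_iv -> Z0.
  case=> g hg; apply: NNPP => hn.
  by move: hg; rewrite (iterE (notZ0 hn) _ (@per_delta F s n)) eqxx.
split; first by split => [/iZ0/Z0_iv|/iv_Z0/iZ0].
split.
  split => [h|]; first by exists (deltaG F n); split => //; exact: per_delta.
  case=> f [hf [g hg]]; apply: Z0_iv; apply: NNPP => hn.
  by move: hg; rewrite (iterE (notZ0 hn) _ hf) eqxx.
split.
  move=> /iZ0 [be h0] [P [hP hk]].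
  have := congr1 (fun f => H zeta f be) (hk 0%N) => /=.
  rewrite add0n Hi // Hd h0 expr0n gtn_eqF // mul1r => /eqP.
  by rewrite eq_sym oner_eq0.
move=> hv; apply/iZ0; apply: NNPP => hn; apply: hv.
exists q0.-1; split => // k.
apply: Fe; try (apply: per_iter => //; exact: per_delta).
move=> be; rewrite !Hi // exprD.
by rewrite Eval (negbTE (notZ0 hn be)) mulr1.
Qed.
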